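(* Let $I\subset S=K[x_1,\dots,x_t]$ be a nonzero proper monomial ideal and let $f\in I$ be a homogeneous element with $\deg f=\alpha(I)$ such that $v(I^{n+1}:f^n)=\alpha(I)-1$ for all sufficiently large $n$. Then $v(I^{n+1})=(n+1)\alpha(I)-1$ for all sufficiently large $n$.
   Context: $K$ is a field and $S$ is standard graded. For a proper graded ideal $J$, the $v$-number is $v(J)=\min\{k\ge 0 : \exists g\in S_k,\ \mathcal P\in\operatorname{Ass}(S/J) \text{ with } (J:g)=\mathcal P\}$. $\alpha(I)=\min\{\deg g : g\in I\setminus\{0\} \text{ homogeneous}\}$. *)

(* Defs.v *)
From HB Require Import structures.
From mathcomp Require Import all_boot all_order all_algebra.
From mathcomp Require Import mpoly.
Set Implicit Arguments. Unset Strict Implicit. Unset Printing Implicit Defensive.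
Import GRing.Theory.
Local Open Scope ring_scope.

Section Defs.
Variables (K : fieldType) (t : nat).
Local Notation S := {mpoly K[t]}.

Definition is_ideal (J : S -> Prop) : Prop :=
  [/\ J 0, (forall a b, J a -> J b -> J (a + b)) & (forall r a, J a -> J (r * a))].

Definition is_proper_ideal (J : S -> Prop) : Prop := is_ideal J /\ ~ J 1.

Definition nonzero_ideal (J : S -> Prop) : Prop := exists a, J a /\ a != 0.

Definition ideal_gen (G : S -> Prop) : S -> Prop :=
  fun f => exists (gs rs : seq S), (forall g, g \in gs -> G g) /\
             f = \sum_(i < size gs) rs`_i * gs`_i.

Definition monomial_ideal (J : S -> Prop) : Prop :=
  is_ideal J /\
  (forall f, J f <-> ideal_gen (fun g => J g /\ exists m : 'X_{1..t}, g = 'X_[m]) f).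

Fixpoint ideal_pow (J : S -> Prop) (n : nat) : S -> Prop :=
  match n with
  | 0%N => fun _ => True
  | n'.+1 => ideal_gen (fun h => exists a b, ideal_pow J n' a /\ J b /\ h = a * b)
  end.

Definition colon (J : S -> Prop) (g : S) : S -> Prop := fun h => J (h * g).

Definition is_prime_ideal (P : S -> Prop) : Prop :=
  is_proper_ideal P /\ (forall a b, P (a * b) -> P a \/ P b).

Definition associated_prime (J P : S -> Prop) : Prop :=
  is_prime_ideal P /\ exists g : S, forall h, P h <-> colon J g h.

(* g is homogeneous of degree k for the standard grading (g in S_k; 0 included) *)
Definition homog_of_deg (k : nat) (g : S) : bool :=
  all (fun m : 'X_{1..t} => mdeg m == k) (msupp g).

Definition vnum_cand (J : S -> Prop) (k : nat) : Prop :=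
  exists g : S, homog_of_deg k g /\
    exists P, associated_prime J P /\ (forall h, colon J g h <-> P h).

Definition is_vnumber (J : S -> Prop) (k : nat) : Prop :=
  vnum_cand J k /\ (forall k', vnum_cand J k' -> (k <= k')%N).

Definition is_alpha (I : S -> Prop) (a : nat) : Prop :=
  (exists g, I g /\ g != 0 /\ homog_of_deg a g) /\
  (forall g d, I g -> g != 0 -> homog_of_deg d g -> (a <= d)%N).

End Defs.

(* Main.v *)
Require Import Defs.
From HB Require Import structures.
From mathcomp Require Import all_boot all_order all_algebra.
From mathcomp Require Import mpoly.
From mathcomp Require Import zify.
Import GRing.Theory.
Local Open Scope ring_scope.

Section Aux.
Variables (K : fieldType) (t : nat).
Local Notation S := {mpoly K[t]}.

Lemma gen1 (G : S -> Prop) y r : G y -> ideal_gen G (r * y).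
Proof.
move=> Gy; exists [:: y], [:: r]; split.
  by move=> g; rewrite inE => /eqP ->.
by rewrite big_ord1.
Qed.

Lemma pow_in (I : S -> Prop) b k : I b -> ideal_pow I k (b ^+ k).
Proof.
move=> Ib; elim: k => [|k IH] //=.
rewrite -[b ^+ k.+1]mul1r; apply: gen1.
by exists (b ^+ k), b; rewrite exprSr.
Qed.

Definition D (k : nat) (p : S) := forall m, m \in msupp p -> (k <= mdeg m)%N.

Lemma D0 k : D k 0.
Proof. by move=> m; rewrite msupp0. Qed.

Lemma DD k p q : D k p -> D k q -> D k (p + q).
Proof.
move=> hp hq m /msuppD_le; rewrite mem_cat => /orP [/hp|/hq] //.
Qed.

Lemma DM j k p q : D j p -> D k q -> D (j + k) (p * q).
Proof.
move=> hp hq m; case/msuppM_le/allpairsP=> /= -[m1 m2] [/= h1 h2 ->].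
by rewrite mdegD leq_add ?hp ?hq.
Qed.

Lemma Dl k r q : D k q -> D k (r * q).
Proof. by move=> hq; rewrite -[k]add0n; apply: DM. Qed.

Lemma Dgen k (G : S -> Prop) p : (forall g, G g -> D k g) -> ideal_gen G p -> D k p.
Proof.
move=> hG [gs [rs [hgs ->]]].
apply: (big_ind (D k)); [exact: D0 | exact: DD |].
move=> i _; apply: Dl; apply: hG; apply: hgs; apply: mem_nth; exact: ltn_ord.
Qed.

Lemma X_neq0 (m : 'X_{1..t}) : ('X_[m] : S) != 0.
Proof. by rewrite -msupp_eq0 msuppX. Qed.

Lemma I_D (I : S -> Prop) a : monomial_ideal I -> is_alpha I a -> forall p, I p -> D a p.
Proof.
move=> [_ hm] [_ ha] p /hm; apply: Dgen => g [Ig [m Eg]]; subst g.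
move=> m'; rewrite msuppX inE => /eqP ->.
apply: (ha _ (mdeg m) Ig (X_neq0 m)).
by rewrite /homog_of_deg msuppX /= eqxx.
Qed.

Lemma pow_D (I : S -> Prop) a : monomial_ideal I -> is_alpha I a ->
  forall k p, ideal_pow I k p -> D (k * a) p.
Proof.
move=> hm ha; elim=> [|k IH] p /=.
  by move=> _ m; rewrite mul0n.
apply: Dgen => g [x [y [hx [hy ->]]]].
rewrite mulSn addnC; apply: DM; first exact: IH.
exact: (@I_D I a hm ha y hy).
Qed.

Lemma D_homog k d p : D k p -> p != 0 -> homog_of_deg d p -> (k <= d)%N.
Proof.
move=> hD nz /allP hh.
case E: (msupp p) => [|m s]; first by move: nz; rewrite -msupp_eq0 E.
have hm : m \in msupp p by rewrite E inE eqxx.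
by move: (hh _ hm) => /eqP <-; apply: hD.
Qed.

Lemma prime_pow (P : S -> Prop) x k : is_prime_ideal P -> P (x ^+ k.+1) -> P x.
Proof.
move=> [_ hp]; elim: k => [|k IH]; first by rewrite expr1.
by rewrite exprS => /hp [] // /IH.
Qed.

Lemma prime_var (P : S -> Prop) (m : 'X_{1..t}) : is_prime_ideal P -> P 'X_[m] ->
  exists i : 'I_t, P 'X_i.
Proof.
move=> hP; have [[_ n1] hp] := hP; rewrite mpolyXE_id.
elim: (index_enum _) => [|i r IH]; first by rewrite big_nil.
rewrite big_cons => /hp [] //.
case: (m i) => [|k]; first by rewrite expr0.
by move/(@prime_pow P _ _ hP) => h; exists i.
Qed.

End Aux.

Theorem corollary4p9 (K : fieldType) (t : nat) (I : {mpoly K[t]} -> Prop)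
    (a : nat) (f : {mpoly K[t]}) :
  monomial_ideal I -> nonzero_ideal I -> is_proper_ideal I ->
  is_alpha I a ->
  I f -> f != 0 -> homog_of_deg a f ->
  (exists N : nat, forall n : nat, (N <= n)%N ->
     is_vnumber (colon (ideal_pow I n.+1) (f ^+ n)) (a - 1)) ->
  exists N : nat, forall n : nat, (N <= n)%N ->
     is_vnumber (ideal_pow I n.+1) (n.+1 * a - 1).
Proof.
move=> hm [p0 [Ip0 nzp0]] hprop ha If nzf hf [N hN]; exists N => n /hN [[g [hg [P [[hPp [g0 hg0]] hgP]]]] _].
split.
  exists (g * f ^+ n); split.
    have -> : (n.+1 * a - 1 = (a - 1) + a * n)%N.
      by case: a {ha hf hN hg hg0 hgP} => [|a]; rewrite ?muln0 // mulSn mulnC; lia.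
    rewrite /homog_of_deg in hg hf *.
    by apply: dhomogM => //; apply: dhomogMn.
  exists P; split.
    split => //; exists (g * f ^+ n) => h.
    by rewrite /colon mulrA; exact: iff_sym (hgP h).
  by move=> h; rewrite /colon mulrA; exact: (hgP h).
move=> k' [g' [hg' [P' [[hP' _] hg'P]]]].
have [m Im] : exists m : 'X_{1..t}, I 'X_[m].
  have [_ hmI] := hm; move: Ip0 => /hmI [gs [rs [hgs E]]].
  case: gs hgs E => [|g1 gs'] hgs E.
    by move: nzp0; rewrite E big_ord0 eqxx.
  have := hgs g1; rewrite inE eqxx => /(_ isT) [Ig1 [m Em]].
  by exists m; rewrite -Em.
have Pm : P' ('X_[m] ^+ n.+1).
  apply/hg'P; rewrite /colon mulrC /=; apply: gen1.
  by exists ('X_[m] ^+ n), 'X_[m]; rewrite exprSr; split => //; apply: pow_in.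
have [[_ n1] hpr] := hP'.
have [i Pi] := @prime_var _ _ P' m hP' (@prime_pow _ _ P' _ _ hP' Pm).
have Ji := proj2 (hg'P 'X_i) Pi.
have nzg' : g' != 0.
  apply/negP => /eqP E; apply: n1; apply/hg'P; rewrite /colon E mulr0 /=.
  by exists [::], [::]; split => //; rewrite big_ord0.
have hD := @pow_D _ _ I a hm ha n.+1 _ Ji.
have nzX : ('X_i : {mpoly K[t]}) != 0 by apply: X_neq0.
have hh : homog_of_deg (1 + k') ('X_i * g').
  rewrite /homog_of_deg in hg' *; apply: dhomogM => //.
  by rewrite dhomogX; apply/eqP; apply: mdeg1.
have := @D_homog _ _ _ _ _ hD (mulf_neq0 nzX nzg') hh.
lia.
Qed.
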